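(* Let $f:\mathbb{R}^d\to\mathbb{R}$ be convex, twice continuously differentiable with $\nabla^2 f(x)\succ0$ for all $x$, and $L_{\text{semi}}$-semi-strongly self-concordant, and let $L_{\text{est}}\ge L_{\text{semi}}$. Then for every $x\in\mathbb{R}^d$, $$f\big(S_{f,L_{\text{est}}}(x)\big)\le\min_{y\in\mathbb{R}^d}\Big\{f(y)+\frac{L_{\text{est}}}{3}\|y-x\|_x^3\Big\}.$$
   Context: Local norms: $\|h\|_x=\langle\nabla^2 f(x)h,h\rangle^{1/2}$, $\|g\|_x^*=\langle g,[\nabla^2 f(x)]^{-1}g\rangle^{1/2}$; for a linear operator $H$ and base point $x$, $\|H\|_{op}=\sup_{v\neq0}\|Hv\|_x^*/\|v\|_x$. $f$ is $L_{\text{semi}}$-semi-strongly self-concordant if $\|\nabla^2 f(y)-\nabla^2 f(x)\|_{op}\le L_{\text{semi}}\|y-x\|_x$ for all $x,y$ (operator norm at base point $x$). $S_{f,L}(x)=x+\arg\min_{h}\{f(x)+\langle\nabla f(x),h\rangle+\frac12\langle\nabla^2f(x)h,h\rangle+\frac L6\|h\|_x^3\}$ (the minimizer exists and is unique since the objective is strictly convex and coercive). *)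

(* Defs.v *)
From HB Require Import structures.
From mathcomp Require Import all_boot all_order all_algebra.
From mathcomp Require Import all_classical all_reals all_analysis.
Set Implicit Arguments. Unset Strict Implicit. Unset Printing Implicit Defensive.
Import Order.TTheory GRing.Theory Num.Theory.
Import numFieldNormedType.Exports.
Local Open Scope ring_scope.

Section Defs.
Variables (R : realType) (d : nat).
Notation V := 'rV[R]_d.

Definition dotp (u v : V) : R := (u *m v^T) 0 0.

(* Action of a d x d matrix A on a vector h (column convention: A h). *)
Definition mxapp (A : 'M[R]_d) (h : V) : V := h *m A^T.

Definition has_gradient (f : V -> R) (g : V -> V) : Prop :=
  forall x, differentiable f x /\ forall h, 'd f x h = dotp (g x) h.

Definition has_hessian (g : V -> V) (H : V -> 'M[R]_d) : Prop :=
  forall x, differentiable g x /\ forall h, 'd g x h = mxapp (H x) h.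

Definition convex_fun (f : V -> R) : Prop :=
  forall (x y : V) (t : R), 0 <= t <= 1 ->
    f (t *: x + (1 - t) *: y) <= t * f x + (1 - t) * f y.

Definition posdef (A : 'M[R]_d) : Prop :=
  forall h : V, h != 0 -> 0 < dotp (mxapp A h) h.

Definition lnorm (A : 'M[R]_d) (h : V) : R := Num.sqrt (dotp (mxapp A h) h).
Definition dnorm (A : 'M[R]_d) (g : V) : R := Num.sqrt (dotp g (mxapp (invmx A) g)).

(* Semi-strong self-concordance: ||H(y) - H(x)||_op <= L ||y - x||_x, where the
   operator norm at x is sup_{v<>0} ||(H(y)-H(x)) v||_x^* / ||v||_x;
   the bound on the sup is written out pointwise. *)
Definition semi_strongly_sc (H : V -> 'M[R]_d) (L : R) : Prop :=
  forall x y v : V,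
    dnorm (H x) (mxapp (H y - H x) v) <= L * lnorm (H x) (y - x) * lnorm (H x) v.

Definition cubic_model (f : V -> R) (g : V -> V) (H : V -> 'M[R]_d) (L : R)
    (x h : V) : R :=
  f x + dotp (g x) h + 2^-1 * dotp (mxapp (H x) h) h + L / 6 * lnorm (H x) h ^+ 3.

(* h is the (unique) minimizer of the model, so S_{f,L}(x) = x + h. *)
Definition is_cubic_step (f : V -> R) (g : V -> V) (H : V -> 'M[R]_d) (L : R)
    (x h : V) : Prop :=
  forall h' : V, cubic_model f g H L x h <= cubic_model f g H L x h'.

End Defs.

(* Main.v *)
Require Import Defs.
From HB Require Import structures.
From mathcomp Require Import all_boot all_order all_algebra.
From mathcomp Require Import all_classical all_reals all_analysis.
From mathcomp Require Import ring lra.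
Import Order.TTheory GRing.Theory Num.Theory.
Import numFieldNormedType.Exports.
Local Open Scope ring_scope.

Lemma line_derive (R : realType) (d : nat) (W : normedModType R)
  (F : 'rV[R]_d -> W) (a u : 'rV[R]_d) (t : R) :
  differentiable F (a + t *: u) ->
  is_derive t 1 (fun s => F (a + s *: u)) ('d F (a + t *: u) u).
Proof.
move=> dF.
have E : (fun h : R => h^-1 *: (((fun s => F (a + s *: u)) \o shift t) (h *: 1) - F (a + t *: u)))
   = (fun h : R => h^-1 *: ((F \o shift (a + t *: u)) (h *: u) - F (a + t *: u))).
  apply/funext => h /=; congr (_ *: (F _ - _)).
  by rewrite /shift /= [h%:A]mulr1 scalerDl addrCA addrA.
split.
  rewrite /derivable E; exact: diff_derivable.
by rewrite -deriveE // /derive E.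
Qed.

Lemma dotp_derive (R : realType) (d : nat) (G : R -> 'rV[R]_d) (t : R) (D w : 'rV[R]_d) :
  is_derive t 1 G D -> is_derive t 1 (fun s => dotp (G s) w) (dotp D w).
Proof.
move=> [dG vG].
have ent : forall i j, is_derive t 1 (fun s => G s i j) (D i j).
  move=> i j; split; first exact: ((derivable_mxP _ _ _).1 dG i j).
  by rewrite -vG derive_mx // mxE.
have -> : (fun s => dotp (G s) w) = \sum_(j < d) (fun s => w 0 j * G s 0 j).
  apply/funext => s; rewrite /dotp mxE fct_sumE; apply: eq_bigr => j _.
  by rewrite !mxE mulrC.
have -> : dotp D w = \sum_(j < d) w 0 j * D 0 j.
  by rewrite /dotp mxE; apply: eq_bigr => j _; rewrite !mxE mulrC.
exact: is_derive_sum.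
Qed.

Lemma mvt_ex {R : realType} (phi D : R -> R) (a b : R) : a <= b ->
  (forall t : R, is_derive t (1:R) phi (D t)) ->
  exists2 c, a <= c <= b & phi b - phi a = D c * (b - a).
Proof.
move=> ab dphi.
have [|c cab E] := MVT_segment ab (fun x _ => dphi x).
2: by exists c => //; move: cab; rewrite in_itv.
apply: continuous_subspaceT => x.
apply: differentiable_continuous; apply/derivable1_diffP.
by have [] := dphi x.
Qed.

Lemma mvt_le (R : realType) (phi D : R -> R) (a b : R) : a <= b ->
  (forall t : R, is_derive t (1:R) phi (D t)) -> (forall t, a <= t <= b -> D t <= 0) ->
  phi b <= phi a.
Proof.
move=> ab dphi Dle.
have [c cab E] := @mvt_ex _ phi D a b ab dphi.
rewrite -subr_le0 E mulr_le0_ge0 ?Dle // subr_ge0 //.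
Qed.

Lemma taylor_up (R : realType) (p0 p1 p2 : R -> R) (A K : R) :
  (forall t : R, is_derive t (1:R) p0 (p1 t)) ->
  (forall t : R, is_derive t (1:R) p1 (p2 t)) ->
  (forall t, 0 <= t <= 1 -> p2 t <= A + K * t) ->
  p0 1 <= p0 0 + p1 0 + A / 2 + K / 6.
Proof.
move=> d0 d1 b2.
pose q1 := fun s => p1 s - p1 0 - A * s - K / 2 * s ^+ 2.
have dq1 : forall t : R, is_derive t (1:R) q1 (p2 t - A - K * t).
  move=> t; have -> : q1 = p1 - cst (p1 0) - A \*: id - (K/2) \*: (@id R) ^+ 2.
    by apply/funext => s.
  apply: is_derive_eq.
  by rewrite subr0 expr1 /GRing.scale /= !mulr1 mulrA divfK ?pnatr_eq0.
have q1le : forall t, 0 <= t <= 1 -> q1 t <= 0.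
  move=> t /andP[t0 t1].
  have -> : 0 = q1 0.
    by rewrite /q1 subrr expr0n /= !mulr0 !subr0.
  apply: (@mvt_le _ q1 (fun t => p2 t - A - K * t) 0 t t0 dq1) => s /andP[s0 st].
  have := b2 s; rewrite s0 (le_trans st t1) => /(_ isT); lra.
pose q0 := fun s => p0 s - p0 0 - p1 0 * s - A / 2 * s ^+ 2 - K / 6 * s ^+ 3.
have dq0 : forall t : R, is_derive t (1:R) q0 (q1 t).
  move=> t; have -> : q0 = p0 - cst (p0 0) - (p1 0) \*: id - (A/2) \*: (@id R) ^+ 2
      - (K/6) \*: (@id R) ^+ 3.
    by apply/funext => s.
  apply: is_derive_eq.
  rewrite /q1 /GRing.scale /= !mulr1 subr0 expr1; by field.
have : q0 1 <= q0 0.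
  apply: (@mvt_le _ q0 q1 0 1 ler01 dq0) => s /q1le; lra.
rewrite /q0 !expr1n !expr0n /= !mulr0 !mulr1 !subr0 subrr; lra.
Qed.

Section S.
Context (R : realType) (d : nat).
Implicit Types (a b c u v w : 'rV[R]_d) (A B : 'M[R]_d).

Lemma dotpDl a b c : dotp (a + b) c = dotp a c + dotp b c.
Proof. by rewrite /dotp mulmxDl mxE. Qed.
Lemma dotpZl (k : R) a c : dotp (k *: a) c = k * dotp a c.
Proof. by rewrite /dotp -scalemxAl mxE. Qed.
Lemma dotpC a b : dotp a b = dotp b a.
Proof. by rewrite /dotp -{1}(trmxK a) -trmx_mul mxE. Qed.
Lemma dotpNl a c : dotp (- a) c = - dotp a c.
Proof. by rewrite -scaleN1r dotpZl mulN1r. Qed.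
Lemma dotpBl a b c : dotp (a - b) c = dotp a c - dotp b c.
Proof. by rewrite dotpDl dotpNl. Qed.
Lemma dotpDr a b c : dotp c (a + b) = dotp c a + dotp c b.
Proof. by rewrite dotpC dotpDl !(dotpC c). Qed.
Lemma dotpZr (k : R) a c : dotp c (k *: a) = k * dotp c a.
Proof. by rewrite dotpC dotpZl dotpC. Qed.
Lemma dotpBr a b c : dotp c (a - b) = dotp c a - dotp c b.
Proof. by rewrite dotpC dotpBl !(dotpC c). Qed.
Lemma mxappD A u v : mxapp A (u + v) = mxapp A u + mxapp A v.
Proof. by rewrite /mxapp mulmxDl. Qed.
Lemma mxappZ A (k : R) u : mxapp A (k *: u) = k *: mxapp A u.
Proof. by rewrite /mxapp scalemxAl. Qed.
Lemma mxappB A u v : mxapp A (u - v) = mxapp A u - mxapp A v.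
Proof. by rewrite /mxapp mulmxBl. Qed.
Lemma mxappBm A B u : mxapp (A - B) u = mxapp A u - mxapp B u.
Proof. by rewrite /mxapp linearB /= mulmxBr. Qed.



Lemma real_cs (a c e : R) : 0 <= a -> 0 <= e ->
  (forall l, 0 <= l ^+ 2 * a - 2 * l * c + e) -> c <= Num.sqrt a * Num.sqrt e.
Proof.
move=> a0 e0 H.
have [c0|c0] := leP c 0.
  by apply: (le_trans c0); rewrite mulr_ge0 ?sqrtr_ge0.
have [a0'|a0'] := leP a 0.
  have aE : a = 0 by apply/eqP; rewrite eq_le a0' a0.
  have := H ((e + 1) / (2 * c)).
  have -> : ((e + 1) / (2 * c)) ^+ 2 * a - 2 * ((e + 1) / (2 * c)) * c + e = - 1.
    rewrite aE mulr0 sub0r; field; lra.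
  lra.
have cae : c ^+ 2 <= a * e.
  have := H (c / a).
  have -> : (c / a) ^+ 2 * a - 2 * (c / a) * c + e = e - c ^+ 2 / a.
    field; lra.
  rewrite subr_ge0 ler_pdivrMr // => h; lra.
rewrite -sqrtrM //.
have -> : c = Num.sqrt (c ^+ 2) by rewrite sqrtr_sqr ger0_norm // ltW.
by rewrite ler_wsqrtr.
Qed.

Lemma posdef_unit A : posdef A -> A \in unitmx.
Proof.
move=> pA; rewrite -unitmx_tr -row_free_unit; apply: inj_row_free => v hv.
apply/eqP/negPn/negP => nz; have := pA v nz.
by rewrite /mxapp hv /dotp mul0mx mxE ltxx.
Qed.

Lemma posdef_ge0 A v : posdef A -> 0 <= dotp (mxapp A v) v.
Proof.
move=> pA; have [->|nz] := eqVneq v 0; last exact/ltW/pA.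
by rewrite /dotp trmx0 mulmx0 mxE.
Qed.

Lemma mx_cs A w u : posdef A ->
  (forall u v, dotp (mxapp A u) v = dotp (mxapp A v) u) ->
  dotp w u <= dnorm A w * lnorm A u.
Proof.
move=> pA sA.
set b := mxapp (invmx A) w.
have hw : w = mxapp A b.
  by rewrite /b /mxapp -mulmxA -trmx_mul mulmxV ?posdef_unit // trmx1 mulmx1.
rewrite /dnorm -/b {1}hw /lnorm hw.
apply: real_cs; try exact: posdef_ge0.
move=> l; have := @posdef_ge0 A (l *: b - u) pA.
rewrite mxappB !mxappZ !dotpBl !dotpBr !dotpZl !dotpZr (sA u b).
lra.
Qed.

End S.

Section T.
Context (R : realType) (d : nat).
Implicit Types (a b c u v w : 'rV[R]_d) (A B : 'M[R]_d).

Lemma lnorm_ge0 A u : 0 <= lnorm A u.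
Proof. exact: sqrtr_ge0. Qed.

Lemma lnormZ A (k : R) u : lnorm A (k *: u) = `|k| * lnorm A u.
Proof.
by rewrite /lnorm mxappZ dotpZl dotpZr mulrA -expr2 sqrtrM ?sqr_ge0 // sqrtr_sqr.
Qed.

Lemma hess_bound (H : 'rV[R]_d -> 'M[R]_d) (Ls : R) x u (t : R) :
  posdef (H x) -> (forall u v, dotp (mxapp (H x) u) v = dotp (mxapp (H x) v) u) ->
  semi_strongly_sc H Ls -> 0 <= t ->
  dotp (mxapp (H (x + t *: u)) u) u - dotp (mxapp (H x) u) u <= Ls * t * lnorm (H x) u ^+ 3
  /\ dotp (mxapp (H x) u) u - dotp (mxapp (H (x + t *: u)) u) u <= Ls * t * lnorm (H x) u ^+ 3.
Proof.
move=> pA sA ssc t0.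
have E : x + t *: u - x = t *: u by rewrite addrC addKr.
have key : forall v, lnorm (H x) v = lnorm (H x) u ->
    dotp (mxapp (H (x + t *: u) - H x) v) u <= Ls * t * lnorm (H x) u ^+ 3.
  move=> v hv; apply: le_trans (@mx_cs _ _ _ _ _ pA sA) _.
  apply: le_trans (ler_wpM2r (lnorm_ge0 _ _) (ssc x (x + t *: u) v)) _.
  rewrite E lnormZ ger0_norm // hv.
  by rewrite le_eqVlt; apply/orP; left; apply/eqP; ring.
split.
  by have := key u erefl; rewrite mxappBm dotpBl.
have := key ((-1) *: u); rewrite lnormZ normrN1 mul1r => /(_ erefl).
by rewrite mxappZ dotpZl mxappBm dotpBl mulN1r opprB.
Qed.


Lemma taylor_both (f : 'rV[R]_d -> R) (g : 'rV[R]_d -> 'rV[R]_d)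
    (H : 'rV[R]_d -> 'M[R]_d) (Ls L : R) x u :
  has_gradient f g -> has_hessian g H -> posdef (H x) ->
  (forall u v, dotp (mxapp (H x) u) v = dotp (mxapp (H x) v) u) ->
  semi_strongly_sc H Ls -> Ls <= L ->
  f (x + u) <= f x + dotp (g x) u + dotp (mxapp (H x) u) u / 2 + L * lnorm (H x) u ^+ 3 / 6 /\
  f x + dotp (g x) u + dotp (mxapp (H x) u) u / 2 - L * lnorm (H x) u ^+ 3 / 6 <= f (x + u).
Proof.
move=> hg hH pA sA ssc LL.
set c := lnorm (H x) u ^+ 3; set q := dotp (mxapp (H x) u) u.
have c0 : 0 <= c by rewrite exprn_ge0 // lnorm_ge0.
have d0 : forall t : R, is_derive t (1:R) (fun s => f (x + s *: u)) (dotp (g (x + t *: u)) u).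
  move=> t; have [df dfe] := hg (x + t *: u); rewrite -dfe; exact: line_derive.
have d1 : forall t : R, is_derive t (1:R) (fun s => dotp (g (x + s *: u)) u)
                                   (dotp (mxapp (H (x + t *: u)) u) u).
  move=> t; apply: dotp_derive; have [dg dge] := hH (x + t *: u); rewrite -dge.
  exact: line_derive.
have bnd : forall t : R, 0 <= t <= 1 ->
    `|dotp (mxapp (H (x + t *: u)) u) u - q| <= L * c * t.
  move=> t /andP[t0 _]; have [h1 h2] := @hess_bound H Ls x u t pA sA ssc t0.
  have : Ls * t * c <= L * c * t.
    by rewrite mulrAC ler_wpM2r // ler_wpM2r.
  rewrite ler_norml; move: h1 h2; rewrite -/c -/q; lra.
have x0 : x + 0 *: u = x by rewrite scale0r addr0.
have x1 : x + 1 *: u = x + u by rewrite scale1r.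
split.
  have := @taylor_up _ _ _ _ q (L * c) d0 d1.
  rewrite x0 x1 => -> //.
  by move=> t /bnd; rewrite ler_norml; lra.
have := @taylor_up _ (fun s => - f (x + s *: u)) (fun s => - dotp (g (x + s *: u)) u)
   (fun s => - dotp (mxapp (H (x + s *: u)) u) u) (- q) (L * c)
   (fun t => is_deriveN (d0 t)) (fun t => is_deriveN (d1 t)).
rewrite /= x0 x1 => h.
suff : - f (x + u) <= - f x + - dotp (g x) u + - q / 2 + L * c / 6 by lra.
apply: h => t /bnd; rewrite ler_norml; lra.
Qed.

End T.

Lemma cont_sum (T : topologicalType) (R : realType) n (F : 'I_n -> T -> R) z :
  (forall i, {for z, continuous (F i)}) -> {for z, continuous (fun y => \sum_(i < n) F i y)}.
Proof.
elim: n F => [|n IH] F hF.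
  have -> : (fun y => \sum_(i < 0) F i y) = cst 0 by apply/funext => y; rewrite big_ord0.
  exact: cst_continuous.
have -> : (fun y => \sum_(i < n.+1) F i y) =
   (fun y => \sum_(i < n) F (widen_ord (leqnSn n) i) y) + F ord_max.
  by apply/funext => y; rewrite big_ord_recr.
by apply: continuousD => //; apply: IH.
Qed.

Lemma Bcont (R : realType) (d : nat) (H : 'rV[R]_d -> 'M[R]_d) (a b : 'rV[R]_d) z :
  (forall i j, continuous (fun x => H x i j)) ->
  {for z, continuous (fun y => dotp (mxapp (H y) a) b)}.
Proof.
move=> Hc.
have -> : (fun y => dotp (mxapp (H y) a) b) =
    (fun y => \sum_(j < d) \sum_(k < d) (a 0 k * b 0 j) * H y j k).
  apply/funext => y; rewrite /dotp /mxapp mxE; apply: eq_bigr => j _.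
  rewrite !mxE big_distrl /=; apply: eq_bigr => k _; rewrite !mxE; ring.
apply: cont_sum => j; apply: cont_sum => k.
have := @continuousM R _ (cst (a 0 k * b 0 j)) (fun y => H y j k) z.
apply; [exact: cst_continuous | exact: Hc].
Qed.

Lemma rep (R : realType) (d : nat) (f : 'rV[R]_d -> R)
    (g : 'rV[R]_d -> 'rV[R]_d) (H : 'rV[R]_d -> 'M[R]_d) (x u v : 'rV[R]_d) (e : R) :
  has_gradient f g -> has_hessian g H -> 0 <= e ->
  exists s r : R, [/\ 0 <= s <= e, 0 <= r <= e &
   f ((x + e *: v) + e *: u) - f (x + e *: u) - f (x + e *: v) + f x =
     e ^+ 2 * dotp (mxapp (H ((x + s *: u) + r *: v)) v) u].
Proof.
move=> hg hH e0.
have dl : forall a w (t : R), is_derive t (1:R) (fun s => f (a + s *: w)) (dotp (g (a + t *: w)) w).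
  move=> a w t; have [df dfe] := hg (a + t *: w); rewrite -dfe; exact: line_derive.
have dl2 : forall a w w' (t : R), is_derive t (1:R) (fun s => dotp (g (a + s *: w)) w')
                                   (dotp (mxapp (H (a + t *: w)) w) w').
  move=> a w w' t; apply: dotp_derive; have [dg dge] := hH (a + t *: w); rewrite -dge.
  exact: line_derive.
pose al := fun s => f ((x + e *: v) + s *: u) - f (x + s *: u).
have da : forall t : R, is_derive t (1:R) al
   (dotp (g ((x + e *: v) + t *: u)) u - dotp (g (x + t *: u)) u).
  move=> t; exact: (is_deriveB (dl (x + e *: v) u t) (dl x u t)).
have [s /andP[s0 se] Es] := @mvt_ex _ al _ 0 e e0 da.
pose be := fun r => dotp (g ((x + s *: u) + r *: v)) u.
have [r /andP[r0 re] Er] := @mvt_ex _ be _ 0 e e0 (dl2 (x + s *: u) v u).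
exists s, r; split; rewrite ?s0 ?se ?r0 ?re //.
transitivity (al e - al 0); first by rewrite /al !scale0r !addr0; ring.
rewrite Es subr0 (addrAC x (e *: v)).
move: Er; rewrite /be scale0r addr0 subr0 => ->.
ring.
Qed.

Lemma hess_sym (R : realType) (d : nat) (f : 'rV[R]_d -> R)
    (g : 'rV[R]_d -> 'rV[R]_d) (H : 'rV[R]_d -> 'M[R]_d) :
  has_gradient f g -> has_hessian g H ->
  (forall i j, continuous (fun x => H x i j)) ->
  forall x u v, dotp (mxapp (H x) u) v = dotp (mxapp (H x) v) u.
Proof.
move=> hg hH Hc x u v.
pose p1 := fun z => dotp (mxapp (H z) v) u.
pose p2 := fun z => dotp (mxapp (H z) u) v.
apply/eqP; rewrite -subr_eq0; apply/negPn/negP => neq.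
set D := _ - _ in neq.
have D0 : 0 < `|D| / 2 by rewrite divr_gt0 // normr_gt0.
have N1 : \forall z \near x, `|p1 x - p1 z| < `|D| / 2.
  exact: (@cvgr_dist_lt _ _ _ _ _ p1 (p1 x) (@Bcont R d H v u x Hc) _ D0).
have N2 : \forall z \near x, `|p2 x - p2 z| < `|D| / 2.
  exact: (@cvgr_dist_lt _ _ _ _ _ p2 (p2 x) (@Bcont R d H u v x Hc) _ D0).
have [del del0 hdel] := (nbhs_normP _ _).1 (filterI N1 N2).
pose e := del / (2 * (`|u| + `|v| + 1)).
have nuv : 0 < `|u| + `|v| + 1 by rewrite ltr_wpDl // addr_ge0.
have e0 : 0 < e by rewrite divr_gt0 // mulr_gt0.
have close : forall s r : R, 0 <= s <= e -> 0 <= r <= e ->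
    forall a b : 'rV[R]_d, `|a| + `|b| <= `|u| + `|v| ->
    ball_ Num.norm x del (x + s *: a + r *: b).
  move=> s r /andP[s0 se] /andP[r0 re] a b ab /=.
  rewrite /ball_ /= -[x + _ + _]addrA opprD addrA subrr sub0r normrN.
  apply: le_lt_trans (ler_normD _ _) _.
  rewrite !normrZ !ger0_norm //.
  have : s * `|a| + r * `|b| <= e * (`|u| + `|v|).
    apply: le_trans (_ : e * `|a| + e * `|b| <= _).
      by rewrite lerD // ler_wpM2r.
    by rewrite -mulrDr ler_wpM2l // ltW.
  move=> h; apply: le_lt_trans h _.
  rewrite /e mulrAC ltr_pdivrMr ?mulr_gt0 //.
  rewrite ltr_pM2l //.
  have : `|u| + `|v| < `|u| + `|v| + 1 by rewrite ltrDl.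
  have : 0 <= `|u| + `|v| by rewrite addr_ge0.
  lra.
have [s [r [sr rr Er]]] := @rep R d f g H x u v e hg hH (ltW e0).
have [s' [r' [sr' rr' Er']]] := @rep R d f g H x v u e hg hH (ltW e0).
have : e ^+ 2 * p1 (x + s *: u + r *: v) = e ^+ 2 * p2 (x + s' *: v + r' *: u).
  rewrite /p1 /p2 -Er -Er' (addrAC x (e *: v)); ring.
move/mulfI => /(_ (expf_neq0 2 (lt0r_neq0 e0))) E.
have [h1 _] := hdel _ (close _ _ sr rr u v (lexx _)).
have [_ h2] := hdel _ (close _ _ sr' rr' v u ltac:(by rewrite addrC)).
move: h1 h2; rewrite E => h1 h2.
have : `|D| <= `|p2 x - p2 (x + s' *: v + r' *: u)| + `|p1 x - p2 (x + s' *: v + r' *: u)|.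
  have -> : D = (p2 x - p2 (x + s' *: v + r' *: u)) - (p1 x - p2 (x + s' *: v + r' *: u)).
    by rewrite /D /p1 /p2; ring.
  exact: ler_normB.
lra.
Qed.
Theorem lemma5 (R : realType) (d : nat) (f : 'rV[R]_d -> R)
    (g : 'rV[R]_d -> 'rV[R]_d) (H : 'rV[R]_d -> 'M[R]_d) (Lsemi Lest : R) :
  convex_fun f ->
  has_gradient f g ->
  has_hessian g H ->
  (forall i j, continuous (fun x => H x i j)) ->
  (forall x, posdef (H x)) ->
  semi_strongly_sc H Lsemi ->
  Lsemi <= Lest ->
  forall x h : 'rV[R]_d, is_cubic_step f g H Lest x h ->
  forall y : 'rV[R]_d,
    f (x + h) <= f y + Lest / 3 * lnorm (H x) (y - x) ^+ 3.
Proof.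
move=> _ hg hH Hc pd ssc LL x h step y.
have sA := @hess_sym R d f g H hg hH Hc x.
have [up _] := @taylor_both R d f g H Lsemi Lest x h hg hH (pd x) sA ssc LL.
have [_ lo] := @taylor_both R d f g H Lsemi Lest x (y - x) hg hH (pd x) sA ssc LL.
have st := step (y - x); rewrite /cubic_model in st.
move: lo; rewrite (addrC x) subrK => lo.
have E1 : forall a : R, Lest * a / 6 = Lest / 6 * a by move=> a; field.
have E2 : forall a : R, Lest / 3 * a = 2 * (Lest / 6 * a) by move=> a; field.
rewrite E1 in up; rewrite E1 in lo; rewrite E2.
move: up lo st.
set A := Lest / 6 * _; set B := Lest / 6 * _.
lra.
Qed.
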